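(* Consider two user types $k\in\{1,2\}$ (write $-k$ for the other type), with $N_k$ users of type $k$, individual arrival rate $\lambda_k$, departure rate $\mu_k$, and instantaneous utility of use $u_k(\tau)=\alpha_k-\beta_k/\tau$. Suppose the service provider uses TDMA, has no admission control (every arriving user is admitted), and offers the pricing policy $\mathbf P=(\phi,(p_s,q))$. When the other users play according to the profile $\pi=(\pi_1,\pi_2)$, $\pi_j=[\pi_{j,0},\pi_{j,1}]$, the expected utility of use and expected cost of a particular type-$k$ user playing $\pi_k'=[\pi_{k,0}',\pi_{k,1}']$ are $$U_k(\theta,\alpha,(\pi;\pi_k'))=\pi_{k,1}'\,\Delta T\,\frac{\lambda_k}{\lambda_k+\mu_k}\Big[\alpha_k-\beta_k\Big(1+\frac{\lambda_k(N_k-1)}{\lambda_k+\mu_k}\pi_{k,1}+\frac{\lambda_{-k}N_{-k}}{\lambda_{-k}+\mu_{-k}}\pi_{-k,1}\Big)\Big]$$ and $$C_k(\theta,\alpha,\mathbf P,(\pi;\pi_k'))=\pi_{k,1}'\big(p_s+q\,\hat B_k(\theta,\alpha,\pi)\big),$$ where $$\hat B_k(\theta,\alpha,\pi)=\sum_{n_{k,1}=1}^{N_k}\sum_{n_{-k,1}=0}^{N_{-k}}\binom{N_k-1}{n_{k,1}-1}\pi_{k,1}^{n_{k,1}-1}(1-\pi_{k,1})^{N_k-n_{k,1}}\binom{N_{-k}}{n_{-k,1}}\pi_{-k,1}^{n_{-k,1}}(1-\pi_{-k,1})^{N_{-k}-n_{-k,1}}B_k^1(\theta,\alpha,\mathbf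 n),$$ with $B_k^1(\theta,\alpha,\mathbf n)=\Delta T\sum_{\mathbf x}\Pr(\mathbf X(\infty)=\mathbf x)\frac{x_{k,1}}{n_{k,1}}\tau_{k,1}(\mathbf x)$ and $\tau_{k,1}(\mathbf x)=\frac{1}{x_{k,1}+x_{-k,1}}$.
   Context: Plan $0$ is the dummy plan $\phi$ (no subscription); plan $1$ charges subscription fee $p_s\ge0$ per billing period of length $\Delta T$ plus $q\ge0$ per unit of guaranteed data rate. Each type-$k$ user independently chooses plan $1$ with probability $\pi_{k,1}$ (the particular user with probability $\pi_{k,1}'$), fixed thereafter; the realization gives $n_{j,1}$ type-$j$ users on plan $1$ ($\mathbf n=(n_{1,1},n_{2,1})$). Given $\mathbf n$, each plan-1 user alternates: while offline it arrives after an exponential time of rate $\lambda_j$, while online it departs after an exponential time of rate $\mu_j$, independently; $\mathbf X(\infty)$ denotes the steady-state system state, with $x_{j,1}$ online type-$j$ plan-1 users. Under TDMA with normalized bandwidth $1$ the bandwidth is shared equally, so an online user's guaranteed throughput is $\tau(\mathbf x)=1/(x_{1,1}+x_{2,1})$. Definitions: $V_k^1(\mathbf n)=\Delta T\sum_{\mathbf x}\Pr(\mathbf X(\infty)=\mathbf x)\frac{x_{k,1}}{n_{k,1}}u_k(\tau(\mathbf x))$; $U_k(\theta,\alpha,(\pi;\pi_k'))=\pi_{k,1}'\sum_{\mathbf n:n_{k,1}\ge1}\Pr(\mathbf n\mid k,1)V_k^1(\mathbf n)$ and $C_k(\theta,\alpha,\mathbf P,(\pi;\pi_k'))=\pi_{k,1}'\big(p_s+\sum_{\mathbf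 n:n_{k,1}\ge1}\Pr(\mathbf n\mid k,1)\,q\,B_k^1(\theta,\alpha,\mathbf n)\big)$, where $\Pr(\mathbf n\mid k,1)$ is the probability of the realization $\mathbf n$ given that the particular user chose plan $1$ (the other users choosing independently according to $\pi$). *)

(* Defs.v *)
From HB Require Import structures.
From mathcomp Require Import all_boot all_order all_algebra.
Set Implicit Arguments. Unset Strict Implicit. Unset Printing Implicit Defensive.
Import Order.TTheory GRing.Theory Num.Theory.
Local Open Scope ring_scope.

(* User types are indexed by bool: [true] = type 1, [false] = type 2;
   the other type [-k] is [~~ k].  Pairs (a,b) of counts are always given
   in LABELED coordinates (type 1, type 2).  [sel k a b] is the type-k
   component of the labeled pair (a,b). *)
Definition sel {T} (k : bool) (a b : T) : T := if k then a else b.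

Section Model.
Variable R : realFieldType.

(* Stationary distribution of the CTMC of online users given n = (n1,n2):
   state (a,b) = (#online type-1, #online type-2) plan-1 users; each offline
   type-j user comes online at rate lam j, each online one leaves at rate mu j.
   [p a b] is the stationary probability Pr(X(oo) = (a,b)); it is
   characterised by support / nonnegativity / normalisation / global balance. *)
Definition is_stationary (lam mu : bool -> R) (n1 n2 : nat)
    (p : nat -> nat -> R) : Prop :=
  [/\ (forall a b, (n1 < a)%N \/ (n2 < b)%N -> p a b = 0),
      (forall a b, (a <= n1)%N -> (b <= n2)%N -> 0 <= p a b),
      \sum_(a < n1.+1) \sum_(b < n2.+1) p a b = 1 &
      (forall a b, (a <= n1)%N -> (b <= n2)%N ->
        p a b * ((n1 - a)%:R * lam true + a%:R * mu true
                 + (n2 - b)%:R * lam false + b%:R * mu false)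
        = (if a is a'.+1 then p a' b * (n1 - a')%:R * lam true else 0)
          + p a.+1 b * (a.+1)%:R * mu true
          + (if b is b'.+1 then p a b' * (n2 - b')%:R * lam false else 0)
          + p a b.+1 * (b.+1)%:R * mu false)].

Definition tau (a b : nat) : R := 1 / (a + b)%:R.

Definition util (alpha beta : bool -> R) (k : bool) (t : R) : R :=
  alpha k - beta k / t.

Definition V1 (alpha beta : bool -> R) (dT : R)
    (pst : nat -> nat -> nat -> nat -> R) (k : bool) (n1 n2 : nat) : R :=
  dT * \sum_(a < n1.+1) \sum_(b < n2.+1)
        pst n1 n2 a b * ((sel k (a : nat) (b : nat))%:R / (sel k n1 n2)%:R)
        * util alpha beta k (tau a b).

Definition B1 (dT : R) (pst : nat -> nat -> nat -> nat -> R)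
    (k : bool) (n1 n2 : nat) : R :=
  dT * \sum_(a < n1.+1) \sum_(b < n2.+1)
        pst n1 n2 a b * ((sel k (a : nat) (b : nat))%:R / (sel k n1 n2)%:R) * tau a b.

Definition choice_prob (p : R) (c : bool) : R := if c then p else 1 - p.

(* Pr(n | k, 1): the particular type-k user chose plan 1; the other
   N_k - 1 type-k users and the N_{-k} type-(-k) users choose plan 1
   independently with probabilities pi1 k, pi1 (~~k); n = (n1,n2) labeled. *)
Definition prob_n_given (N : bool -> nat) (pi1 : bool -> R) (k : bool)
    (n1 n2 : nat) : R :=
  \sum_(c : {ffun 'I_(N k).-1 -> bool})
   \sum_(d : {ffun 'I_(N (~~ k)) -> bool})
    (if (sel k n1 n2 == (\sum_i nat_of_bool (c i)).+1)%N
        && (sel k n2 n1 == \sum_i nat_of_bool (d i))%N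
     then (\prod_i choice_prob (pi1 k) (c i))
          * \prod_i choice_prob (pi1 (~~ k)) (d i)
     else 0).

Definition Uk (N : bool -> nat) (pi1 : bool -> R) (pik' : R)
    (alpha beta : bool -> R) (dT : R) (pst : nat -> nat -> nat -> nat -> R)
    (k : bool) : R :=
  pik' * \sum_(n1 < (N true).+1) \sum_(n2 < (N false).+1)
    (if (1 <= sel k (n1 : nat) (n2 : nat))%N
     then prob_n_given N pi1 k n1 n2 * V1 alpha beta dT pst k n1 n2 else 0).

Definition Ck (N : bool -> nat) (pi1 : bool -> R) (pik' : R)
    (ps q dT : R) (pst : nat -> nat -> nat -> nat -> R) (k : bool) : R :=
  pik' * (ps + \sum_(n1 < (N true).+1) \sum_(n2 < (N false).+1)
    (if (1 <= sel k (n1 : nat) (n2 : nat))%N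
     then prob_n_given N pi1 k n1 n2 * (q * B1 dT pst k n1 n2) else 0)).

Definition Bhat (N : bool -> nat) (pi1 : bool -> R) (dT : R)
    (pst : nat -> nat -> nat -> nat -> R) (k : bool) : R :=
  \sum_(1 <= a < (N k).+1) \sum_(0 <= b < (N (~~ k)).+1)
    ('C((N k).-1, a.-1)%:R * pi1 k ^+ a.-1 * (1 - pi1 k) ^+ (N k - a)
     * 'C(N (~~ k), b)%:R * pi1 (~~ k) ^+ b * (1 - pi1 (~~ k)) ^+ (N (~~ k) - b)
     * B1 dT pst k (sel k a b) (sel k b a)).

End Model.

(* Main.v *)
Require Import Defs.
From HB Require Import structures.
From mathcomp Require Import all_boot all_order all_algebra.
From mathcomp.algebra_tactics Require Import ring.
Set Implicit Arguments. Unset Strict Implicit. Unset Printing Implicit Defensive.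
Import Order.TTheory GRing.Theory Num.Theory.
Local Open Scope ring_scope.

Section S.
Variable R : realFieldType.

Lemma shiftL1 n (K : nat -> nat -> R) : K n n.+1 = 0 ->
  \sum_(a < n.+1) K a a.+1 = \sum_(a < n.+1) (if (a : nat) is a'.+1 then K a' a else 0).
Proof.
move=> HK; rewrite big_ord_recr /= HK addr0 big_ord_recl /= add0r.
by apply: eq_bigr => i _.
Qed.

Lemma shiftL2 n (K : nat -> nat -> R) : K 0%N 0%N = 0 -> K n.+1 n = 0 ->
  \sum_(a < n.+1) K a a.-1 = \sum_(a < n.+1) K a.+1 a.
Proof.
move=> H0 HK; rewrite big_ord_recl /= H0 add0r big_ord_recr /= HK addr0.
by apply: eq_bigr => i _.
Qed.

Lemma gen (lam mu : bool -> R) n1 n2 p (f : nat -> nat -> R) :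
  is_stationary lam mu n1 n2 p ->
  \sum_(a < n1.+1) \sum_(b < n2.+1) p a b *
    ((n1 - a)%:R * lam true * (f a.+1 b - f a b) + a%:R * mu true * (f a.-1 b - f a b)
     + (n2 - b)%:R * lam false * (f a b.+1 - f a b) + b%:R * mu false * (f a b.-1 - f a b)) = 0.
Proof.
case=> Hsup Hnn Hsum Hbal.
have E : forall (a : 'I_n1.+1) (b : 'I_n2.+1),
  p a b * ((n1 - a)%:R * lam true * (f a.+1 b - f a b) + a%:R * mu true * (f a.-1 b - f a b)
     + (n2 - b)%:R * lam false * (f a b.+1 - f a b) + b%:R * mu false * (f a b.-1 - f a b))
  = (p a b * (n1 - a)%:R * lam true * f a.+1 b + p a b * a%:R * mu true * f a.-1 b
     + p a b * (n2 - b)%:R * lam false * f a b.+1 + p a b * b%:R * mu false * f a b.-1)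
    - f a b * ((if (a : nat) is a'.+1 then p a' b * (n1 - a')%:R * lam true else 0)
          + p a.+1 b * (a.+1)%:R * mu true
          + (if (b : nat) is b'.+1 then p a b' * (n2 - b')%:R * lam false else 0)
          + p a b.+1 * (b.+1)%:R * mu false).
  move=> a b; rewrite -(Hbal a b); [ring | by rewrite -ltnS ltn_ord | by rewrite -ltnS ltn_ord].
under eq_bigr => a _ do under eq_bigr => b _ do rewrite E.
under eq_bigr => a _ do rewrite sumrB.
rewrite sumrB; apply/eqP; rewrite subr_eq0; apply/eqP.
under eq_bigr => a _ do rewrite !big_split /=.
under [RHS]eq_bigr => a _ do under eq_bigr => b _ do rewrite !mulrDr.
under [RHS]eq_bigr => a _ do rewrite !big_split /=.
rewrite !big_split /=.
congr (_ + _ + _ + _).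
- have H1 := @shiftL1 n1 (fun a c => \sum_(b < n2.+1) p a b * (n1 - a)%:R * lam true * f c b).
  rewrite /= in H1; rewrite H1; last by apply: big1 => b _; rewrite subnn mulr0n mulr0 !mul0r.
  apply: eq_bigr => -[[|a] Ha] _ /=.
    by rewrite big1 // => b _; rewrite mulr0.
  by apply: eq_bigr => b _; ring.
- have H1 := @shiftL2 n1 (fun a c => \sum_(b < n2.+1) p a b * a%:R * mu true * f c b).
  rewrite /= in H1; rewrite H1.
  + by apply: eq_bigr => a _; apply: eq_bigr => b _; ring.
  + by apply: big1 => b _; rewrite mulr0n mulr0 !mul0r.
  + by apply: big1 => b _; rewrite Hsup; [rewrite !mul0r | left; exact: ltnSn].
- apply: eq_bigr => a _.
  have H1 := @shiftL1 n2 (fun b c => p a b * (n2 - b)%:R * lam false * f a c).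
  rewrite /= in H1; rewrite H1; last by rewrite subnn mulr0n mulr0 !mul0r.
  by apply: eq_bigr => -[[|b] Hb] _ /=; [rewrite mulr0 | ring].
- apply: eq_bigr => a _.
  have H1 := @shiftL2 n2 (fun b c => p a b * b%:R * mu false * f a c).
  rewrite /= in H1; rewrite H1.
  + by apply: eq_bigr => b _; ring.
  + by rewrite mulr0n mulr0 !mul0r.
  + by rewrite Hsup; [rewrite !mul0r | right; exact: ltnSn].
Qed.

Definition Sm n1 n2 (p : nat -> nat -> R) (g : R -> R -> R) :=
  \sum_(a < n1.+1) \sum_(b < n2.+1) p a b * g a%:R b%:R.

Lemma genpoly (lam mu : bool -> R) n1 n2 p (f : nat -> nat -> R) c0 c1 c2 c3 c4 c5 :
  is_stationary lam mu n1 n2 p ->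
  (forall a b, (a <= n1)%N -> (b <= n2)%N ->
    (n1 - a)%:R * lam true * (f a.+1 b - f a b) + a%:R * mu true * (f a.-1 b - f a b)
     + (n2 - b)%:R * lam false * (f a b.+1 - f a b) + b%:R * mu false * (f a b.-1 - f a b)
    = c0 + c1 * a%:R + c2 * b%:R + c3 * (a%:R * a%:R) + c4 * (b%:R * b%:R) + c5 * (a%:R * b%:R)) ->
  c0 * Sm n1 n2 p (fun _ _ => 1) + c1 * Sm n1 n2 p (fun A _ => A) + c2 * Sm n1 n2 p (fun _ B => B)
  + c3 * Sm n1 n2 p (fun A _ => A * A) + c4 * Sm n1 n2 p (fun _ B => B * B)
  + c5 * Sm n1 n2 p (fun A B => A * B) = 0.
Proof.
move=> Hst Hpt; rewrite -(gen f Hst) /Sm !pair_big /= !mulr_sumr -!big_split /=.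
apply: eq_bigr => -[[a Ha] [b Hb]] _ /=.
rewrite Hpt; [ring | by rewrite -ltnS | by rewrite -ltnS].
Qed.


Lemma solve_lin (x y c : R) : c != 0 -> y - c * x = 0 -> x = y / c.
Proof.
move=> hc h; rewrite (_ : y = c * x); first by rewrite mulrC mulKf.
by apply/eqP; rewrite -subr_eq0 h.
Qed.

Ltac pt := let a := fresh "a" in let b := fresh "b" in let Ha := fresh in let Hb := fresh in
  move=> a b Ha Hb; rewrite ?natrB //; case: a Ha => [|a] Ha; case: b Hb => [|b] Hb /=; repeat match goal with | x := _ |- _ => subst x end; ring.

Lemma moments (lam mu : bool -> R) n1 n2 p :
  (forall j, 0 < lam j) -> (forall j, 0 < mu j) ->
  is_stationary lam mu n1 n2 p ->
  let s1 := lam true + mu true in let s2 := lam false + mu false in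
  [/\ Sm n1 n2 p (fun A _ => A) = n1%:R * lam true / s1,
      Sm n1 n2 p (fun _ B => B) = n2%:R * lam false / s2,
      Sm n1 n2 p (fun A _ => A * A) = n1%:R * lam true * (mu true + n1%:R * lam true) / (s1 * s1),
      Sm n1 n2 p (fun _ B => B * B) = n2%:R * lam false * (mu false + n2%:R * lam false) / (s2 * s2) &
      Sm n1 n2 p (fun A B => A * B) = n1%:R * n2%:R * lam true * lam false / (s1 * s2)].
Proof.
move=> Hl Hm Hst s1 s2.
have S0 : Sm n1 n2 p (fun _ _ => 1) = 1.
  by case: Hst => _ _ H _; rewrite /Sm -[RHS]H; apply: eq_bigr => a _; apply: eq_bigr => b _ /=; rewrite mulr1.
have s1n : s1 != 0 by rewrite /s1 gt_eqF // addr_gt0.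
have s2n : s2 != 0 by rewrite /s2 gt_eqF // addr_gt0.
have eA := genpoly (f := fun a b => a%:R) (c0 := n1%:R * lam true) (c1 := - s1) (c2 := 0) (c3 := 0) (c4 := 0) (c5 := 0) Hst ltac:(pt).
have eB := genpoly (f := fun a b => b%:R) (c0 := n2%:R * lam false) (c1 := 0) (c2 := - s2) (c3 := 0) (c4 := 0) (c5 := 0) Hst ltac:(pt).
have eAA := genpoly (f := fun a b => a%:R * a%:R) (c0 := n1%:R * lam true) (c1 := 2 * n1%:R * lam true - lam true + mu true) (c2 := 0) (c3 := - (2 * s1)) (c4 := 0) (c5 := 0) Hst ltac:(pt).
have eBB := genpoly (f := fun a b => b%:R * b%:R) (c0 := n2%:R * lam false) (c1 := 0) (c2 := 2 * n2%:R * lam false - lam false + mu false) (c3 := 0) (c4 := - (2 * s2)) (c5 := 0) Hst ltac:(pt).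
have eAB := genpoly (f := fun a b => a%:R * b%:R) (c0 := 0) (c1 := n2%:R * lam false) (c2 := n1%:R * lam true) (c3 := 0) (c4 := 0) (c5 := - (s1 + s2)) Hst ltac:(pt).
rewrite S0 in eA eB eAA eBB eAB.
set SA := Sm n1 n2 p (fun A _ => A) in eA eB eAA eBB eAB *.
set SB := Sm n1 n2 p (fun _ B => B) in eA eB eAA eBB eAB *.
set SAA := Sm n1 n2 p (fun A _ => A * A) in eA eB eAA eBB eAB *.
set SBB := Sm n1 n2 p (fun _ B => B * B) in eA eB eAA eBB eAB *.
set SAB := Sm n1 n2 p (fun A B => A * B) in eA eB eAA eBB eAB *.
have hA : SA = n1%:R * lam true / s1 by apply: solve_lin s1n _; rewrite -[RHS]eA; ring.
have hB : SB = n2%:R * lam false / s2 by apply: solve_lin s2n _; rewrite -[RHS]eB; ring.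
have s1n2 : 2 * s1 != 0 by rewrite mulf_neq0 // pnatr_eq0.
have s2n2 : 2 * s2 != 0 by rewrite mulf_neq0 // pnatr_eq0.
have s12n : s1 + s2 != 0 by rewrite /s1 /s2 gt_eqF // !addr_gt0.
have hAA : SAA = (n1%:R * lam true + (2 * n1%:R * lam true - lam true + mu true) * SA) / (2 * s1).
  by apply: solve_lin s1n2 _; rewrite -[RHS]eAA; ring.
have hBB : SBB = (n2%:R * lam false + (2 * n2%:R * lam false - lam false + mu false) * SB) / (2 * s2).
  by apply: solve_lin s2n2 _; rewrite -[RHS]eBB; ring.
have hAB : SAB = (n2%:R * lam false * SA + n1%:R * lam true * SB) / (s1 + s2).
  by apply: solve_lin s12n _; rewrite -[RHS]eAB; ring.
split => //.
- rewrite hAA hA; move: s1n s1n2; rewrite /s1 => h1 h2; field; done.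
- rewrite hBB hB; move: s2n s2n2; rewrite /s2 => h1 h2; field; done.
- rewrite hAB hA hB; move: s1n s2n s12n; rewrite /s1 /s2 => h1 h2 h3; field; by rewrite h1 h2 h3.
Qed.

Lemma Sm_comb n1 n2 (p : nat -> nat -> R) (c0 c1 c2 c3 c4 c5 : R) :
  \sum_(a < n1.+1) \sum_(b < n2.+1) p a b * (c0 + c1 * a%:R + c2 * b%:R + c3 * (a%:R * a%:R)
      + c4 * (b%:R * b%:R) + c5 * (a%:R * b%:R))
  = c0 * Sm n1 n2 p (fun _ _ => 1) + c1 * Sm n1 n2 p (fun A _ => A) + c2 * Sm n1 n2 p (fun _ B => B)
  + c3 * Sm n1 n2 p (fun A _ => A * A) + c4 * Sm n1 n2 p (fun _ B => B * B)
  + c5 * Sm n1 n2 p (fun A B => A * B).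
Proof.
rewrite /Sm !pair_big /= !mulr_sumr -!big_split /=.
by apply: eq_bigr => -[a b] _ /=; ring.
Qed.

Lemma S0_1 (lam mu : bool -> R) n1 n2 p : is_stationary lam mu n1 n2 p -> Sm n1 n2 p (fun _ _ => 1) = 1.
Proof.
by case=> _ _ H _; rewrite /Sm -[RHS]H; apply: eq_bigr => a _; apply: eq_bigr => b _ /=; rewrite mulr1.
Qed.

Lemma V1_formula (lam mu alpha beta : bool -> R) dT pst k n1 n2 :
  (forall j, 0 < lam j) -> (forall j, 0 < mu j) ->
  (forall n1 n2, is_stationary lam mu n1 n2 (pst n1 n2)) -> (1 <= sel k n1 n2)%N ->
  V1 alpha beta dT pst k n1 n2 = dT * (lam k / (lam k + mu k)) *
    (alpha k - beta k * (1 + ((sel k n1 n2)%:R - 1) * (lam k / (lam k + mu k))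
       + (sel k n2 n1)%:R * (lam (~~ k) / (lam (~~ k) + mu (~~ k))))).
Proof.
move=> Hl Hm Hst Hk.
have s1n : lam true + mu true != 0 by rewrite gt_eqF // addr_gt0.
have s2n : lam false + mu false != 0 by rewrite gt_eqF // addr_gt0.
have [hA hB hAA hBB hAB] := moments Hl Hm (Hst n1 n2).
have h0 := S0_1 (Hst n1 n2).
have nn : (sel k n1 n2)%:R != 0 :> R by rewrite pnatr_eq0 -lt0n.
case: k Hk nn => /= Hk nn.
- rewrite /V1 /=.
  transitivity (dT * \sum_(a < n1.+1) \sum_(b < n2.+1) pst n1 n2 a b *
     (0 + alpha true / n1%:R * a%:R + 0 * b%:R + (- beta true / n1%:R) * (a%:R * a%:R)
      + 0 * (b%:R * b%:R) + (- beta true / n1%:R) * (a%:R * b%:R))).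
    congr (_ * _); apply: eq_bigr => a _; apply: eq_bigr => b _.
    by rewrite /util /tau natrD div1r invrK; ring.
  rewrite Sm_comb hA hAA hAB h0.
  move: s1n s2n nn => h1 h2 h3; field; by rewrite ?h1 ?h2 ?h3.
- rewrite /V1 /=.
  transitivity (dT * \sum_(a < n1.+1) \sum_(b < n2.+1) pst n1 n2 a b *
     (0 + 0 * a%:R + alpha false / n2%:R * b%:R + 0 * (a%:R * a%:R)
      + (- beta false / n2%:R) * (b%:R * b%:R) + (- beta false / n2%:R) * (a%:R * b%:R))).
    congr (_ * _); apply: eq_bigr => a _; apply: eq_bigr => b _.
    by rewrite /util /tau natrD div1r invrK; ring.
  rewrite Sm_comb hB hBB hAB h0.
  move: s1n s2n nn => h1 h2 h3; field; by rewrite ?h1 ?h2 ?h3.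
Qed.

Definition w (m j : nat) (x : R) := 'C(m, j)%:R * x ^+ j * (1 - x) ^+ (m - j).

Lemma binom_ffun m j (x : R) :
  \sum_(c : {ffun 'I_m -> bool})
     (if (j == \sum_i nat_of_bool (c i))%N then \prod_i choice_prob x (c i) else 0)
  = w m j x.
Proof.
rewrite (reindex (fun A : {set 'I_m} => [ffun i => i \in A])) /=; last first.
  exists (fun c : {ffun 'I_m -> bool} => [set i | c i]) => A _.
    by apply/setP => i; rewrite inE ffunE.
  by apply/ffunP => i; rewrite ffunE inE.
have E1 : forall A : {set 'I_m}, (\sum_i nat_of_bool ([ffun i => i \in A] i))%N = #|A|.
  move=> A; rewrite -sum1_card [RHS]big_mkcond /=; apply: eq_bigr => i _.
  by rewrite ffunE; case: (i \in A).
have E2 : forall A : {set 'I_m}, \prod_i choice_prob x ([ffun i => i \in A] i)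
    = x ^+ #|A| * (1 - x) ^+ (m - #|A|).
  move=> A; rewrite (bigID (mem A)) /=.
  rewrite (eq_bigr (fun _ => x)); last by move=> i Hi; rewrite ffunE Hi.
  rewrite [X in _ * X](eq_bigr (fun _ => 1 - x)); last by move=> i /negbTE Hi; rewrite ffunE Hi.
  rewrite !prodr_const; congr (_ * _ ^+ _).
  have h := cardC A; rewrite card_ord in h; rewrite -[LHS](addKn #|A|); congr (subn _ _); rewrite -[RHS]h; congr (_ + _); apply: eq_card => i.
under eq_bigr => A _ do rewrite E1 E2.
rewrite -big_mkcond /=.
rewrite (eq_bigr (fun _ => x ^+ j * (1 - x) ^+ (m - j))); last by move=> A /eqP ->.
rewrite sumr_const.
have -> : #|[pred A : {set 'I_m} | j == #|A|]| = 'C(m, j).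
  have h := card_draws 'I_m j; rewrite card_ord in h; rewrite -h; apply: eq_card => A; rewrite inE /= eq_sym.
  by [].
by rewrite /w -mulr_natl; ring.
Qed.

Lemma prob_formula (N : bool -> nat) (pi1 : bool -> R) k n1 n2 :
  prob_n_given N pi1 k n1 n2 =
  (if sel k n1 n2 is a.+1 then w (N k).-1 a (pi1 k) else 0) * w (N (~~ k)) (sel k n2 n1) (pi1 (~~ k)).
Proof.
rewrite /prob_n_given.
transitivity ((\sum_(c : {ffun 'I_(N k).-1 -> bool})
    (if (sel k n1 n2 == (\sum_i nat_of_bool (c i)).+1)%N then \prod_i choice_prob (pi1 k) (c i) else 0))
  * \sum_(d : {ffun 'I_(N (~~ k)) -> bool})
    (if (sel k n2 n1 == \sum_i nat_of_bool (d i))%N then \prod_i choice_prob (pi1 (~~ k)) (d i) else 0)).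
  rewrite mulr_suml; apply: eq_bigr => c _; rewrite mulr_sumr; apply: eq_bigr => d _.
  by case: (sel k n1 n2 == _); case: (sel k n2 n1 == _); rewrite /= ?mulr0 ?mul0r.
rewrite binom_ffun; congr (_ * _).
case: (sel k n1 n2) => [|a].
  by rewrite big1 // => c _.
by rewrite -binom_ffun; apply: eq_bigr => c _; rewrite eqSS.
Qed.

Lemma wsum0 m (x : R) : \sum_(j < m.+1) w m j x = 1.
Proof.
have := exprDn (1 - x) x m; rewrite subrK expr1n => ->.
by apply: eq_bigr => i _; rewrite /w -mulr_natl; ring.
Qed.

Lemma wsum1 m (x : R) : \sum_(j < m.+1) j%:R * w m j x = m%:R * x.
Proof.
case: m => [|m]; first by rewrite big_ord_recl big_ord0 /= !mul0r addr0.
rewrite big_ord_recl /= mul0r add0r.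
transitivity (\sum_(j < m.+1) (m.+1)%:R * x * w m j x); last by rewrite -mulr_sumr wsum0 mulr1.
apply: eq_bigr => j _; rewrite /w /bump /= add1n subSS.
have h := mul_bin_diag m.+1 j; rewrite /= in h.
rewrite !mulrA -natrM -h natrM exprS; ring.
Qed.

Lemma reidx (N : bool -> nat) k (G : nat -> nat -> R) :
  \sum_(n1 < (N true).+1) \sum_(n2 < (N false).+1) G n1 n2
  = \sum_(a < (N k).+1) \sum_(b < (N (~~ k)).+1) G (sel k (a : nat) (b : nat)) (sel k (b : nat) (a : nat)).
Proof. by case: k => //=; rewrite exchange_big. Qed.

Lemma split_a n (F : nat -> R) :
  \sum_(a < n.+2) (if (1 <= a)%N then F a else 0) = \sum_(a < n.+1) F a.+1.
Proof. by rewrite big_ord_recl /= add0r. Qed.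

Lemma wdouble M L (x y K0 K1 K2 : R) :
  \sum_(a < M.+1) \sum_(b < L.+1) w M a x * w L b y * (K0 + K1 * a%:R + K2 * b%:R)
  = K0 + K1 * (M%:R * x) + K2 * (L%:R * y).
Proof.
transitivity (\sum_(a < M.+1) ((K0 + K2 * (L%:R * y)) * w M a x + K1 * (a%:R * w M a x))).
  apply: eq_bigr => a _.
  rewrite (eq_bigr (fun b : 'I_L.+1 => (w M a x * (K0 + K1 * a%:R)) * w L b y + (w M a x * K2) * (b%:R * w L b y)));
    last by move=> b _; ring.
  by rewrite big_split /= -!mulr_sumr wsum0 wsum1; ring.
by rewrite big_split /= -!mulr_sumr wsum0 wsum1; ring.
Qed.

Lemma selK1 k (a b : nat) : sel k (sel k a b) (sel k b a) = a. Proof. by case: k. Qed.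
Lemma selK2 k (a b : nat) : sel k (sel k b a) (sel k a b) = b. Proof. by case: k. Qed.
End S.

Theorem lemma2 (R : realFieldType) (k : bool) (N : bool -> nat)
    (lam mu alpha beta pi1 : bool -> R) (pik' dT ps q : R)
    (pst : nat -> nat -> nat -> nat -> R) :
  (0 < N k)%N ->
  (forall j, 0 < lam j) -> (forall j, 0 < mu j) ->
  (forall j, 0 <= pi1 j <= 1) -> 0 <= pik' <= 1 ->
  0 < dT -> 0 <= ps -> 0 <= q ->
  (forall n1 n2, is_stationary lam mu n1 n2 (pst n1 n2)) ->
  Uk N pi1 pik' alpha beta dT pst k
    = pik' * dT * (lam k / (lam k + mu k))
      * (alpha k - beta k * (1 + lam k * ((N k)%:R - 1) / (lam k + mu k) * pi1 k
                               + lam (~~ k) * (N (~~ k))%:R / (lam (~~ k) + mu (~~ k))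
                                 * pi1 (~~ k)))
  /\ Ck N pi1 pik' ps q dT pst k = pik' * (ps + q * Bhat N pi1 dT pst k).
Proof.
move=> Hk Hl Hm _ _ _ _ _ Hst.
set M := (N k).-1.
have NE : N k = M.+1 by rewrite /M prednK.
have Mr : M%:R = (N k)%:R - 1 :> R by rewrite NE -natr1 addrK.
split.
- rewrite /Uk.
  have := reidx N k (fun n1 n2 => if (1 <= sel k n1 n2)%N then prob_n_given N pi1 k n1 n2 * V1 alpha beta dT pst k n1 n2 else 0).
  rewrite /= => ->.
  under eq_bigr => a _ do under eq_bigr => b _ do rewrite selK1.
  rewrite NE big_ord_recl /= big1 ?add0r //.
  set rk := lam k / (lam k + mu k).
  set rk' := lam (~~ k) / (lam (~~ k) + mu (~~ k)).
  transitivity (pik' * \sum_(a < M.+1) \sum_(b < (N (~~ k)).+1)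
     w M a (pi1 k) * w (N (~~ k)) b (pi1 (~~ k)) *
     (dT * rk * (alpha k - beta k) + (- (dT * rk * beta k * rk)) * a%:R
      + (- (dT * rk * beta k * rk')) * b%:R)).
    congr (_ * _); apply: eq_bigr => a _; apply: eq_bigr => b _.
    have hv := @V1_formula R lam mu alpha beta dT pst k (sel k (a.+1 : nat) (b : nat)) (sel k (b : nat) (a.+1 : nat)) Hl Hm Hst.
    rewrite selK1 selK2 in hv.
    rewrite /bump /= add1n prob_formula selK1 selK2 hv //.
    rewrite -/M -/rk -/rk'; ring.
  rewrite wdouble /rk /rk'.
  have h1 : lam k + mu k != 0 by rewrite gt_eqF // addr_gt0.
  have h2 : lam (~~ k) + mu (~~ k) != 0 by rewrite gt_eqF // addr_gt0.
  field; by rewrite ?h1 ?h2.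
- rewrite /Ck; congr (_ * (_ + _)).
  have := reidx N k (fun n1 n2 => if (1 <= sel k n1 n2)%N then prob_n_given N pi1 k n1 n2 * (q * B1 dT pst k n1 n2) else 0).
  rewrite /= => ->.
  under eq_bigr => a _ do under eq_bigr => b _ do rewrite selK1.
  rewrite /Bhat NE big_ord_recl /= big1 ?add0r //.
  rewrite big_add1 /= big_mkord mulr_sumr; apply: eq_bigr => a _.
  rewrite big_mkord mulr_sumr; apply: eq_bigr => b _.
  rewrite /bump /= add1n prob_formula selK1 selK2 /w subSS /=.
  rewrite -/M; ring.
Qed.
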